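(* Let $0<\gamma<\frac n2$, $1\leq k<\frac n2-\gamma$, and let $\Sigma^{k+1}=\mathbb{H}^{k+1}/\pi$ be a closed hyperbolic manifold with Laplace eigenvalues $0=\lambda_0<\lambda_1\leq\lambda_2\leq\dots$ (repeated with multiplicity). For $m,\ell\in\mathbb{N}\cup\{0\}$ let $\mu_m=m(m+n-k-2)$, $a_m=\sqrt{\mu_m+(\frac{n-k-2}{2})^2}$, $b_\ell=\sqrt{\lambda_\ell-(\frac k2)^2}$ (with $b_\ell=i\sqrt{(\frac k2)^2-\lambda_\ell}$ if $\lambda_\ell<(\frac k2)^2$), and $$\Theta_{m,\ell}=4^\gamma\frac{\Gamma\big(\frac{1+\gamma}{2}+\frac{a_m+b_\ell i}{2}\big)}{\Gamma\big(\frac{1-\gamma}{2}+\frac{a_m+b_\ell i}{2}\big)}\,\frac{\Gamma\big(\frac{1+\gamma}{2}+\frac{a_m-b_\ell i}{2}\big)}{\Gamma\big(\frac{1-\gamma}{2}+\frac{a_m-b_\ell i}{2}\big)}.$$ Then $\Theta_{m+1,0}>\Theta_{m,0}$ and $\Theta_{m,\ell+1}\geq\Theta_{m,\ell}$ for all $m,\ell\in\mathbb{N}\cup\{0\}$.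
   Context: The numbers $\Theta_{m,\ell}$ are the (positive real) eigenvalues of the conformal fractional Laplacian of the product metric on $\mathbb{S}^{n-k-1}\times\Sigma^{k+1}$. *)

(* Defs.v *)
From Stdlib Require Import Reals Factorial.
From Coquelicot Require Import Coquelicot.
Open Scope R_scope.

(* complex power N^z = exp(z ln N) for a positive integer N *)
Definition Cnatpow (N : nat) (z : C) : C :=
  let t := ln (INR N) in
  (exp (Re z * t) * cos (Im z * t), exp (Re z * t) * sin (Im z * t)).

Fixpoint Cprod_shift (z : C) (N : nat) : C :=
  match N with
  | O => z
  | S N' => Cmult (Cprod_shift z N') (Cplus z (RtoC (INR N)))
  end.

Definition gauss_seq (z : C) (N : nat) : C :=
  Cdiv (Cmult (RtoC (INR (fact N))) (Cnatpow N z)) (Cprod_shift z N).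

(* The complex Gamma function, defined as the limit of the Gauss product
   (componentwise limit of real and imaginary parts); this limit exists
   for every z not in {0,-1,-2,...}. *)
Definition CGamma (z : C) : C :=
  (real (Lim_seq (fun N => Re (gauss_seq z N))),
   real (Lim_seq (fun N => Im (gauss_seq z N)))).

Definition mu_ (n k m : nat) : R := INR m * (INR m + INR n - INR k - 2).

Definition a_ (n k m : nat) : R :=
  sqrt (mu_ n k m + ((INR n - INR k - 2) / 2) ^ 2).

Definition b_ (k : nat) (lam : R) : C :=
  if Rle_dec ((INR k / 2) ^ 2) lam
  then RtoC (sqrt (lam - (INR k / 2) ^ 2))
  else Cmult Ci (RtoC (sqrt ((INR k / 2) ^ 2 - lam))).

Definition Theta (n k : nat) (gamma : R) (lambda : nat -> R) (m l : nat) : C :=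
  let a := RtoC (a_ n k m) in
  let bi := Cmult (b_ k (lambda l)) Ci in
  let zp := Cdiv (Cplus a bi) (RtoC 2) in
  let zm := Cdiv (Cminus a bi) (RtoC 2) in
  Cmult (RtoC (Rpower 4 gamma))
    (Cmult
      (Cdiv (CGamma (Cplus (RtoC ((1 + gamma) / 2)) zp))
            (CGamma (Cplus (RtoC ((1 - gamma) / 2)) zp)))
      (Cdiv (CGamma (Cplus (RtoC ((1 + gamma) / 2)) zm))
            (CGamma (Cplus (RtoC ((1 - gamma) / 2)) zm)))).

(* Main.v *)
Require Import Defs.
From Stdlib Require Import Reals Lra Lia Psatz Factorial.
From Coquelicot Require Import Coquelicot.
Open Scope R_scope.

Lemma ln_le_sub1 t : 0 < t -> ln t <= t - 1.
Proof. intros Ht. pose proof (exp_ineq1_le (ln t)). rewrite exp_ln in H; lra. Qed.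

Lemma lnstep (N : R) : 1 <= N -> 1/(N+1) <= ln (N+1) - ln N <= 1/N.
Proof.
  intros HN. split.
  - assert (H := ln_le_sub1 (N/(N+1)) ltac:(apply Rdiv_lt_0_compat; lra)). rewrite ln_div in H by lra.
    assert (N/(N+1) - 1 = - (1/(N+1))) by (field; lra). lra.
  - assert (H := ln_le_sub1 ((N+1)/N) ltac:(apply Rdiv_lt_0_compat; lra)). rewrite ln_div in H by lra.
    assert ((N+1)/N - 1 = 1/N) by (field; lra). lra.
Qed.

Lemma abs_sin_le t : Rabs (sin t) <= Rabs t.
Proof.
  assert (H := bounded_variation sin cos 1 0 t).
  rewrite sin_0, !Rminus_0_r, Rmult_1_l in H. apply H.
  intros s _. split. apply is_derive_Reals, derivable_pt_lim_sin.
  apply Rabs_le. pose proof (COS_bound s). lra.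
Qed.

Lemma abs_cos_le t : Rabs (cos t - 1) <= Rabs t.
Proof.
  assert (H := bounded_variation cos (fun s => - sin s) 1 0 t).
  rewrite cos_0, !Rminus_0_r, Rmult_1_l in H. apply H.
  intros s _. split. apply is_derive_Reals, derivable_pt_lim_cos.
  apply Rabs_le. pose proof (SIN_bound s). lra.
Qed.

Lemma abs_exp_le t : Rabs (exp t - 1) <= Rabs t * exp (Rabs t).
Proof.
  assert (H := bounded_variation exp exp (exp (Rabs t)) 0 t).
  rewrite exp_0, !Rminus_0_r in H. rewrite Rmult_comm. apply H.
  intros s Hs. split. apply is_derive_Reals, derivable_pt_lim_exp.
  rewrite Rabs_pos_eq by (left; apply exp_pos).
  rewrite Rminus_0_r in Hs. destruct (Rle_lt_or_eq_dec s (Rabs s) (Rle_abs s)) as [h|h].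
  left; apply exp_increasing; lra. rewrite h; apply exp_le_3 || (apply Rle_refl) || idtac.
  destruct (Rle_lt_or_eq_dec _ _ Hs). left; apply exp_increasing; lra. rewrite e; lra.
Qed.

Lemma exp_mono a b : a <= b -> exp a <= exp b.
Proof. intros [h|h]. left; apply exp_increasing; auto. rewrite h; lra. Qed.

Lemma exp_bnd p t : Rabs t <= 1 -> exp (p * t) <= exp (Rabs p).
Proof.
  intros Ht. destruct (Rle_lt_or_eq_dec _ _ (Rle_trans _ _ _ (Rle_abs (p*t)) 
    (ltac:(rewrite Rabs_mult; pose proof (Rabs_pos p); pose proof (Rabs_pos t); nra) : Rabs (p*t) <= Rabs p))) as [h|h].
  left; apply exp_increasing; auto. rewrite h; lra.
Qed.

Lemma d1 p q t : Rabs t <= 1 ->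
  Rabs (exp (p*t) * cos (q*t) - 1) <= (Rabs p + Rabs q) * exp (Rabs p) * Rabs t.
Proof.
  intros Ht. 
  replace (exp (p*t) * cos (q*t) - 1) with ((exp (p*t) - 1) * cos (q*t) + (cos (q*t) - 1)) by ring.
  eapply Rle_trans. apply Rabs_triang. rewrite Rabs_mult.
  pose proof (abs_exp_le (p*t)). pose proof (abs_cos_le (q*t)).
  rewrite !Rabs_mult in *. pose proof (exp_bnd p t Ht).
  assert (exp (Rabs p * Rabs t) <= exp (Rabs p)).
  { apply exp_mono. pose proof (Rabs_pos p); pose proof (Rabs_pos t); nra. }
  assert (Rabs (cos (q*t)) <= 1) by (apply Rabs_le; apply COS_bound).
  pose proof (Rabs_pos p). pose proof (Rabs_pos q). pose proof (Rabs_pos t).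
  pose proof (Rabs_pos (cos (q*t))). pose proof (Rabs_pos (exp (p*t) - 1)).
  assert (1 <= exp (Rabs p)) by (rewrite <- exp_0; apply exp_mono; auto).
  assert (Rabs (exp (p*t) - 1) <= Rabs p * Rabs t * exp (Rabs p)).
  { eapply Rle_trans. apply H. apply Rmult_le_compat_l. apply Rmult_le_pos; auto. auto. }
  assert (Rabs (exp (p * t) - 1) * Rabs (cos (q * t)) <= Rabs (exp (p * t) - 1)) by (rewrite <- (Rmult_1_r (Rabs (exp (p * t) - 1))) at 2; apply Rmult_le_compat_l; auto).
  assert (Rabs q * Rabs t <= Rabs q * Rabs t * exp (Rabs p)) by (rewrite <- (Rmult_1_r (Rabs q * Rabs t)) at 1; apply Rmult_le_compat_l; [apply Rmult_le_pos|]; auto).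
  lra.
Qed.

Lemma d2 p q t : Rabs t <= 1 ->
  Rabs (exp (p*t) * sin (q*t)) <= exp (Rabs p) * Rabs q * Rabs t.
Proof.
  intros Ht. rewrite Rabs_mult. pose proof (abs_sin_le (q*t)). rewrite Rabs_mult in H.
  rewrite (Rabs_pos_eq (exp _)) by (left; apply exp_pos).
  pose proof (exp_bnd p t Ht). pose proof (exp_pos (p*t)). 
  pose proof (Rabs_pos (sin (q*t))). nra.
Qed.

Lemma est_re p q s : Rabs s <= 1 ->
  Rabs (exp (p*s) * cos (q*s) - 1 - p*s) <= (Rabs p + Rabs q)^2 * exp (Rabs p) * s^2.
Proof.
  intros Hs.
  remember (Rabs p + Rabs q) as A eqn:HA. remember (exp (Rabs p)) as E eqn:HE.
  assert (H := bounded_variation (fun s => exp (p*s) * cos (q*s) - 1 - p*s)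
     (fun t => p * (exp (p*t) * cos (q*t) - 1) - q * (exp (p*t) * sin (q*t)))
     (A^2 * E * Rabs s) 0 s).
  match type of H with ?P -> _ => assert (HP : P); [|specialize (H HP)] end.
  2:{ cbv beta in H. rewrite !Rmult_0_r, exp_0, cos_0 in H. replace (s - 0) with s in H by ring.
  replace (1 * 1 - 1 - 0) with 0 in H by ring. rewrite Rminus_0_r in H.
  assert (Hs2 : s^2 = Rabs s * Rabs s) by (rewrite <- Rabs_mult; rewrite Rabs_pos_eq; nra). rewrite Hs2.
  eapply Rle_trans; [apply H|]. right; ring. }
  intros t Ht. replace (t - 0) with t in Ht by ring. replace (s - 0) with s in Ht by ring. cbv beta. split.
  - auto_derive; auto. ring.
  - assert (Rabs t <= 1) by lra.
    pose proof (d1 p q t H0). pose proof (d2 p q t H0).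
    eapply Rle_trans. apply Rabs_triang. rewrite Rabs_Ropp, (Rabs_mult p), (Rabs_mult q).
    pose proof (Rabs_pos p). pose proof (Rabs_pos q). pose proof (Rabs_pos t).
    assert (0 <= E) by (subst E; left; apply exp_pos). rewrite <- HA, <- HE in H1. rewrite <- HE in H2.
    assert (Rabs p * Rabs (exp (p * t) * cos (q * t) - 1) <= Rabs p * (A * E * Rabs t)) by (apply Rmult_le_compat_l; auto).
    assert (Rabs q * Rabs (exp (p * t) * sin (q * t)) <= Rabs q * (E * Rabs q * Rabs t)) by (apply Rmult_le_compat_l; auto).
    assert ((Rabs p * A + Rabs q * Rabs q) * (E * Rabs t) <= A^2 * (E * Rabs s)).
    { apply Rmult_le_compat. nra. apply Rmult_le_pos; auto. subst A; nra.
      apply Rmult_le_compat_l; auto. }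
    lra.
Qed.

Lemma est_im p q s : Rabs s <= 1 ->
  Rabs (exp (p*s) * sin (q*s) - q*s) <= (Rabs p + Rabs q)^2 * exp (Rabs p) * s^2.
Proof.
  intros Hs.
  remember (Rabs p + Rabs q) as A eqn:HA. remember (exp (Rabs p)) as E eqn:HE.
  assert (H := bounded_variation (fun s => exp (p*s) * sin (q*s) - q*s)
     (fun t => p * (exp (p*t) * sin (q*t)) + q * (exp (p*t) * cos (q*t) - 1))
     (A^2 * E * Rabs s) 0 s).
  match type of H with ?P -> _ => assert (HP : P); [|specialize (H HP)] end.
  2:{ cbv beta in H. rewrite !Rmult_0_r, exp_0, sin_0 in H. replace (s - 0) with s in H by ring.
  replace (1 * 0 - 0) with 0 in H by ring. rewrite Rminus_0_r in H.
  assert (Hs2 : s^2 = Rabs s * Rabs s) by (rewrite <- Rabs_mult; rewrite Rabs_pos_eq; nra). rewrite Hs2.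
  eapply Rle_trans; [apply H|]. right; ring. }
  intros t Ht. replace (t - 0) with t in Ht by ring. replace (s - 0) with s in Ht by ring. cbv beta. split.
  - auto_derive; auto. ring.
  - assert (Rabs t <= 1) by lra.
    pose proof (d1 p q t H0). pose proof (d2 p q t H0).
    eapply Rle_trans. apply Rabs_triang. rewrite (Rabs_mult p), (Rabs_mult q).
    pose proof (Rabs_pos p). pose proof (Rabs_pos q). pose proof (Rabs_pos t).
    assert (0 <= E) by (subst E; left; apply exp_pos). rewrite <- HA, <- HE in H1. rewrite <- HE in H2.
    assert (Rabs q * Rabs (exp (p * t) * cos (q * t) - 1) <= Rabs q * (A * E * Rabs t)) by (apply Rmult_le_compat_l; auto).
    assert (Rabs p * Rabs (exp (p * t) * sin (q * t)) <= Rabs p * (E * Rabs q * Rabs t)) by (apply Rmult_le_compat_l; auto).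
    assert ((Rabs p * Rabs q + Rabs q * A) * (E * Rabs t) <= A^2 * (E * Rabs s)).
    { apply Rmult_le_compat. nra. apply Rmult_le_pos; auto. subst A; nra.
      apply Rmult_le_compat_l; auto. }
    lra.
Qed.

Lemma conv_lemma (u : nat -> R) (M K : R) :
  (forall N, Rabs (u N) <= M) ->
  (forall N, Rabs (u (S N) - u N) <= K * (1 / (INR N + 1) - 1 / (INR N + 2))) ->
  ex_finite_lim_seq u.
Proof.
  intros HM HK.
  set (v := fun N => u N + K / (INR N + 1)).
  assert (K0 : 0 <= K).
  { specialize (HK O). simpl in HK. pose proof (Rabs_pos (u 1%nat - u 0%nat)).
    assert (0 < 1/(0+1) - 1/(0+2)) by (field_simplify; lra).
    destruct (Rle_or_lt 0 K); auto. nra. }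
  assert (Hd : forall N, v (S N) <= v N).
  { intros N. unfold v. rewrite S_INR. specialize (HK N).
    apply Rabs_le_between in HK. pose proof (pos_INR N).
    assert (K / (INR N + 1 + 1) = K / (INR N + 1) - K * (1 / (INR N + 1) - 1 / (INR N + 2))) by (field; lra).
    lra. }
  assert (Hb : forall N, - M <= v N).
  { intros N. unfold v. specialize (HM N). apply Rabs_le_between in HM.
    pose proof (pos_INR N). assert (0 <= K / (INR N + 1)) by (apply Rdiv_le_0_compat; lra). lra. }
  destruct (ex_finite_lim_seq_decr v (-M) Hd Hb) as [l Hl].
  exists l.
  apply is_lim_seq_ext with (fun N => v N - K / (INR N + 1)).
  { intros N; unfold v; ring. }
  replace (Finite l) with (Finite (l - K * 0)) by (f_equal; ring).
  apply is_lim_seq_minus'; auto.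
  assert (H0 : is_lim_seq (fun N => / INR (S N)) 0).
  { apply (is_lim_seq_incr_1 (fun N => / INR N)).
    replace (Finite 0) with (Rbar_inv p_infty) by reflexivity.
    apply is_lim_seq_inv. apply is_lim_seq_INR. discriminate. }
  apply (is_lim_seq_scal_l _ K) in H0. simpl in H0.
  eapply is_lim_seq_ext; [|exact H0].
  intros N; simpl. destruct N; simpl; unfold Rdiv; try ring; lra.
Qed.

Definition ecx (p q s : R) : C := (exp (p*s) * cos (q*s), exp (p*s) * sin (q*s)).

Lemma Cnatpow_ecx N p q : Cnatpow N (p,q) = ecx p q (ln (INR N)).
Proof. reflexivity. Qed.

Lemma ecx_add p q a b : ecx p q (a+b) = (ecx p q a * ecx p q b)%C.
Proof.
  unfold ecx, Cmult; simpl. rewrite !Rmult_plus_distr_l, exp_plus, cos_plus, sin_plus.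
  f_equal; ring.
Qed.

Lemma Cmod_le_sum (z : C) : Cmod z <= Rabs (Re z) + Rabs (Im z).
Proof.
  destruct z as [x y]; unfold Cmod; simpl.
  pose proof (Rabs_pos x); pose proof (Rabs_pos y).
  rewrite <- (sqrt_pow2 (Rabs x + Rabs y)) by lra.
  apply sqrt_le_1_alt. assert (Rabs x * Rabs x = x*x) by (rewrite <- Rabs_mult; apply Rabs_pos_eq; nra).
  assert (Rabs y * Rabs y = y*y) by (rewrite <- Rabs_mult; apply Rabs_pos_eq; nra). nra.
Qed.

Lemma re_pos_nz (z : C) : 0 < Re z -> z <> 0%C.
Proof. intros H E; rewrite E in H; simpl in H; lra. Qed.

Lemma Cmult_nz (a b : C) : a <> 0%C -> b <> 0%C -> (a * b)%C <> 0%C.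
Proof.
  intros Ha Hb E. apply (f_equal Cmod) in E. rewrite Cmod_mult, Cmod_0 in E.
  apply Rmult_integral in E. destruct E as [E|E]; apply Cmod_eq_0 in E; auto.
Qed.

Lemma Cprod_nz p q N : 0 < p -> Cprod_shift (p,q) N <> 0%C.
Proof.
  intros Hp. induction N as [|N IH]; simpl.
  - apply re_pos_nz; simpl; auto.
  - apply Cmult_nz; auto. apply re_pos_nz. simpl. pose proof (pos_INR (S N)). 
    unfold Re in *; simpl in *. lra.
Qed.

Lemma gauss_rec p q N : 0 < p ->
  (gauss_seq (p,q) (S N) * ((p,q) + RtoC (INR (S N))))%C =
  (gauss_seq (p,q) N * (RtoC (INR (S N)) * ecx p q (ln (INR (S N)) - ln (INR N))))%C.
Proof.
  intros Hp. unfold gauss_seq.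
  change (Cprod_shift (p,q) (S N)) with (Cprod_shift (p,q) N * ((p,q) + RtoC (INR (S N))))%C.
  rewrite !Cnatpow_ecx.
  replace (ln (INR (S N))) with (ln (INR N) + (ln (INR (S N)) - ln (INR N))) at 1 by ring.
  rewrite ecx_add.
  change (fact (S N)) with (S N * fact N)%nat. rewrite mult_INR, RtoC_mult.
  assert (H1 := Cprod_nz p q N Hp).
  assert (H2 : ((p,q) + RtoC (INR (S N)))%C <> 0%C).
  { apply re_pos_nz. change (Re ((p,q) + RtoC (INR (S N)))%C) with (p + INR (S N)). pose proof (pos_INR (S N)). lra. }
  field. auto.
Qed.

Definition Kc (p q : R) : R := 4 * (Rabs p + Rabs q)^2 * exp (Rabs p) + Cmod (p,q).

Lemma ecx_err p q L : Rabs L <= 1 ->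
  Cmod (ecx p q L - 1 - (p,q) * RtoC L)%C <= 2 * (Rabs p + Rabs q)^2 * exp (Rabs p) * L^2.
Proof.
  intros HL. eapply Rle_trans. apply Cmod_le_sum.
  replace (Re (ecx p q L - 1 - (p,q) * RtoC L)%C) with (exp (p*L) * cos (q*L) - 1 - p*L) by (unfold ecx; simpl; ring).
  replace (Im (ecx p q L - 1 - (p,q) * RtoC L)%C) with (exp (p*L) * sin (q*L) - q*L) by (unfold ecx; simpl; ring).
  pose proof (est_re p q L HL). pose proof (est_im p q L HL). lra.
Qed.

Lemma step_bound p q N : 0 < p -> (1 <= N)%nat ->
  Cmod (gauss_seq (p,q) (S N) - gauss_seq (p,q) N)%C <=
  Cmod (gauss_seq (p,q) N) * (Kc p q * (1 / INR N - 1 / (INR N + 1))).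
Proof.
  intros Hp HN.
  set (g1 := gauss_seq (p,q) (S N)). set (g0 := gauss_seq (p,q) N).
  set (L := ln (INR (S N)) - ln (INR N)).
  set (D := ((p,q) + RtoC (INR (S N)))%C).
  assert (HR := gauss_rec p q N Hp). fold g1 g0 L D in HR.
  assert (NR1 : 1 <= INR N) by (apply (le_INR 1); auto).
  assert (HS : INR (S N) = INR N + 1) by apply S_INR.
  assert (HL := lnstep (INR N) NR1). rewrite <- HS in HL. fold L in HL. rewrite HS in HL.
  assert (Hid : ((g1 - g0) * D = g0 * (RtoC (INR (S N)) * (ecx p q L - 1 - (p,q) * RtoC L)
                   + (p,q) * (RtoC (INR (S N)) * RtoC L - 1)))%C).
  { transitivity (g1 * D - g0 * D)%C. ring. rewrite HR. unfold D. ring. }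
  apply (f_equal Cmod) in Hid. rewrite !Cmod_mult in Hid.
  set (A2E := (Rabs p + Rabs q)^2 * exp (Rabs p)).
  assert (A2E0 : 0 <= A2E) by (unfold A2E; pose proof (exp_pos (Rabs p)); apply Rmult_le_pos; [apply pow2_ge_0|lra]).
  assert (HL1 : Rabs L <= 1).
  { rewrite Rabs_pos_eq. 2:{ assert (0 < 1/(INR N + 1)) by (apply Rdiv_lt_0_compat; lra). lra. }
    assert (1 / INR N <= 1) by (unfold Rdiv; rewrite Rmult_1_l; rewrite <- Rinv_1; apply Rinv_le_contravar; lra). lra. }
  assert (E1 := ecx_err p q L HL1). fold A2E in E1.
  set (X := Cmod (ecx p q L - 1 - (p, q) * RtoC L)%C) in *.
  assert (E2 : Cmod (RtoC (INR (S N)) * RtoC L - 1)%C <= 1 / INR N).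
  { rewrite <- RtoC_mult. replace (RtoC (INR (S N) * L) - 1)%C with (RtoC (INR (S N) * L - 1)).
    2:{ unfold RtoC, Cminus, Cplus, Copp; simpl. f_equal; ring. }
    rewrite Cmod_R. rewrite HS in *. 
    assert ((INR N + 1) * (1 / (INR N + 1)) = 1) by (field; lra).
    assert ((INR N + 1) * (1 / INR N) = 1 + 1 / INR N) by (field; lra).
    assert ((INR N + 1) * (1 / (INR N + 1)) <= (INR N + 1) * L) by (apply Rmult_le_compat_l; lra).
    assert ((INR N + 1) * L <= (INR N + 1) * (1 / INR N)) by (apply Rmult_le_compat_l; lra).
    rewrite Rabs_pos_eq; lra. }
  assert (HD : INR N + 1 <= Cmod D).
  { eapply Rle_trans; [|apply re_le_Cmod]. change (Re D) with (p + INR (S N)).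
    rewrite Rabs_pos_eq; rewrite HS; lra. }
  set (Y := Cmod (g1 - g0)%C) in *. set (G := Cmod g0) in *.
  assert (Y0 : 0 <= Y) by apply Cmod_ge_0. assert (G0 : 0 <= G) by apply Cmod_ge_0.
  set (W := Cmod (p,q)) in *. assert (W0 : 0 <= W) by apply Cmod_ge_0.
  set (Z := Cmod (RtoC (INR (S N)) * RtoC L - 1)%C) in *.
  assert (Htri : Y * Cmod D <= G * (INR (S N) * X + W * Z)).
  { rewrite Hid. apply Rmult_le_compat_l; auto. eapply Rle_trans. apply Cmod_triangle.
    rewrite !Cmod_mult, Cmod_R, Rabs_pos_eq by (rewrite HS; lra). unfold X, W, Z. lra. }
  rewrite HS in Htri.
  set (n := INR N) in *.
  assert (L2 : L^2 <= 1 / n^2).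
  { assert (0 <= L) by (assert (0 < 1/(n + 1)) by (apply Rdiv_lt_0_compat; lra); lra).
    replace (1/n^2) with ((1/n)^2) by (field; lra). apply pow_incr; lra. }
  assert (XB : X <= 2 * A2E / n^2).
  { replace (2 * (Rabs p + Rabs q) ^ 2 * exp (Rabs p)) with (2 * A2E) in E1 by (unfold A2E; ring). eapply Rle_trans. apply E1. replace (2 * A2E / n^2) with (2 * A2E * (1/n^2)) by (field; lra).
    apply Rmult_le_compat_l; lra. }
  assert (Hstep : Y * (n + 1) <= G * ((n+1) * (2 * A2E / n^2) + W * (1/n))).
  { eapply Rle_trans. apply Rmult_le_compat_l. auto. apply HD.
    eapply Rle_trans. apply Htri. apply Rmult_le_compat_l; auto.
    apply Rplus_le_compat. apply Rmult_le_compat_l; lra. apply Rmult_le_compat_l; lra. }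
  assert (Hfin : (n+1) * (2 * A2E / n^2) + W * (1/n) <= (n+1) * (Kc p q * (1 / n - 1 / (n + 1)))).
  { replace (Kc p q) with (4*A2E + W) by (unfold Kc, A2E, W; ring).
    replace ((n+1) * ((4 * A2E + W) * (1 / n - 1 / (n + 1)))) with ((4 * A2E + W) / n) by (field; lra).
    replace ((n+1) * (2 * A2E / n^2) + W * (1/n)) with ((2 * A2E * (n + 1) / n + W) / n) by (field; lra).
    unfold Rdiv. apply Rmult_le_compat_r. left; apply Rinv_0_lt_compat; lra.
    assert (2 * A2E * (n+1) * / n <= 4 * A2E).
    { apply (Rmult_le_reg_r n). lra. rewrite Rmult_assoc, Rinv_l by lra. nra. }
    lra. }
  apply (Rmult_le_reg_r (n+1)). lra.
  eapply Rle_trans. apply Hstep. 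
  replace (G * (Kc p q * (1 / n - 1 / (n + 1))) * (n + 1)) with (G * ((n+1) * (Kc p q * (1 / n - 1 / (n + 1))))) by ring.
  apply Rmult_le_compat_l; auto.
Qed.

Lemma Kc_pos p q : 0 <= Kc p q.
Proof.
  unfold Kc. pose proof (exp_pos (Rabs p)). pose proof (Cmod_ge_0 (p,q)).
  pose proof (pow2_ge_0 (Rabs p + Rabs q)).
  assert (0 <= 4 * (Rabs p + Rabs q) ^ 2 * exp (Rabs p)) by (apply Rmult_le_pos; lra). lra.
Qed.

Lemma re_minus (a b : C) : Re (a - b)%C = Re a - Re b.
Proof. destruct a, b; simpl; ring. Qed.
Lemma im_minus (a b : C) : Im (a - b)%C = Im a - Im b.
Proof. destruct a, b; simpl; ring. Qed.
Lemma im_le_Cmod (z : C) : Rabs (Im z) <= Cmod z.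
Proof.
  destruct z as [x y]; unfold Cmod; simpl. rewrite <- sqrt_Rsqr_abs.
  apply sqrt_le_1_alt. unfold Rsqr. nra.
Qed.

Lemma mod_bound p q N : 0 < p -> (1 <= N)%nat ->
  Cmod (gauss_seq (p,q) N) <= Cmod (gauss_seq (p,q) 1) * exp (Kc p q * (1 - 1 / INR N)).
Proof.
  intros Hp HN. induction N as [|N IH]. lia.
  destruct (Nat.eq_dec N 0) as [->|HN0].
  - simpl INR. replace (1 - 1/1) with 0 by field. rewrite Rmult_0_r, exp_0. lra.
  - assert (HN1 : (1 <= N)%nat) by lia. specialize (IH HN1).
    pose proof (step_bound p q N Hp HN1).
    set (g1 := gauss_seq (p,q) (S N)) in *. set (g0 := gauss_seq (p,q) N) in *.
    assert (Cmod g1 <= Cmod g0 + Cmod (g1 - g0)%C).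
    { replace g1 with (g0 + (g1 - g0))%C at 1 by ring. apply Cmod_triangle. }
    assert (NR1 : 1 <= INR N) by (apply (le_INR 1); auto).
    set (d := 1 / INR N - 1 / (INR N + 1)) in *.
    assert (d0 : 0 <= d).
    { unfold d. assert (1/(INR N + 1) <= 1 / INR N). 
      { unfold Rdiv; rewrite !Rmult_1_l. apply Rinv_le_contravar; lra. } lra. }
    pose proof (Kc_pos p q).
    assert (Hm : Cmod g1 <= Cmod g0 * exp (Kc p q * d)).
    { pose proof (exp_ineq1_le (Kc p q * d)). pose proof (Cmod_ge_0 g0).
      assert (Cmod g0 * (1 + Kc p q * d) <= Cmod g0 * exp (Kc p q * d)) by (apply Rmult_le_compat_l; lra).
      lra. }
    eapply Rle_trans. apply Hm.
    replace (Kc p q * (1 - 1 / INR (S N))) with (Kc p q * (1 - 1 / INR N) + Kc p q * d).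
    2:{ unfold d. rewrite S_INR. ring. }
    rewrite exp_plus, <- Rmult_assoc. apply Rmult_le_compat_r. left; apply exp_pos. auto.
Qed.

Lemma gauss_conv p q : 0 < p ->
  ex_finite_lim_seq (fun N => Re (gauss_seq (p,q) N)) /\
  ex_finite_lim_seq (fun N => Im (gauss_seq (p,q) N)).
Proof.
  intros Hp.
  set (M := Cmod (gauss_seq (p,q) 1) * exp (Kc p q)).
  assert (HM : forall N, Cmod (gauss_seq (p,q) (S N)) <= M).
  { intros N. eapply Rle_trans. apply mod_bound; auto; lia.
    apply Rmult_le_compat_l. apply Cmod_ge_0. apply exp_mono.
    pose proof (Kc_pos p q). rewrite S_INR. pose proof (pos_INR N).
    assert (0 <= 1 / (INR N + 1)) by (apply Rdiv_le_0_compat; lra). nra. }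
  assert (HD : forall N, Cmod (gauss_seq (p,q) (S (S N)) - gauss_seq (p,q) (S N))%C <=
                 M * Kc p q * (1 / (INR N + 1) - 1 / (INR N + 2))).
  { intros N. eapply Rle_trans. apply step_bound; auto; lia.
    replace (1 / INR (S N) - 1 / (INR (S N) + 1)) with (1 / (INR N + 1) - 1 / (INR N + 2))
      by (rewrite S_INR; field; pose proof (pos_INR N); lra).
    rewrite Rmult_assoc. apply Rmult_le_compat_r; auto.
    pose proof (pos_INR N). pose proof (Kc_pos p q).
    assert (1 / (INR N + 2) <= 1 / (INR N + 1)) by (unfold Rdiv; rewrite !Rmult_1_l; apply Rinv_le_contravar; lra).
    apply Rmult_le_pos; lra. }
  split.
  - destruct (conv_lemma (fun N => Re (gauss_seq (p,q) (S N))) M (M * Kc p q)) as [l Hl].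
    + intros N. eapply Rle_trans. apply re_le_Cmod. auto.
    + intros N. rewrite <- re_minus. eapply Rle_trans. apply re_le_Cmod. auto.
    + exists l. apply is_lim_seq_incr_1. auto.
  - destruct (conv_lemma (fun N => Im (gauss_seq (p,q) (S N))) M (M * Kc p q)) as [l Hl].
    + intros N. eapply Rle_trans. apply im_le_Cmod. auto.
    + intros N. rewrite <- im_minus. eapply Rle_trans. apply im_le_Cmod. auto.
    + exists l. apply is_lim_seq_incr_1. auto.
Qed.

Lemma CGamma_lim p q : 0 < p ->
  is_lim_seq (fun N => Re (gauss_seq (p,q) N)) (Re (CGamma (p,q))) /\
  is_lim_seq (fun N => Im (gauss_seq (p,q) N)) (Im (CGamma (p,q))).
Proof.
  intros Hp. destruct (gauss_conv p q Hp) as [[l1 H1] [l2 H2]].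
  unfold CGamma. cbn [Re Im fst snd]. rewrite (is_lim_seq_unique _ _ H1), (is_lim_seq_unique _ _ H2).
  simpl. auto.
Qed.

Fixpoint prodf (f : nat -> R) (N : nat) : R :=
  match N with O => f O | S N' => prodf f N' * f (S N') end.

Definition rprod (X : R) (N : nat) : R := prodf (fun j => X + INR j) N.
Definition prodH (X T : R) (N : nat) : R := prodf (fun j => (X + INR j)^2 + T) N.
Definition HH (X T : R) (N : nat) : R :=
  (INR (fact N))^2 * exp (2 * X * ln (INR N)) / prodH X T N.
Definition rg (X : R) (N : nat) : R := INR (fact N) * exp (X * ln (INR N)) / rprod X N.

Lemma prodf_pos f N : (forall j, 0 < f j) -> 0 < prodf f N.
Proof. intros Hf; induction N; simpl; auto. apply Rmult_lt_0_compat; auto. Qed.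

Lemma prodf_mult f g N : prodf (fun j => f j * g j) N = prodf f N * prodf g N.
Proof. induction N; simpl; auto. rewrite IHN. ring. Qed.

Lemma prodf_le f g N : (forall j, 0 <= f j <= g j) -> prodf f N <= prodf g N.
Proof.
  intros H. assert (forall N, 0 <= prodf f N <= prodf g N).
  { induction N0; simpl. apply H. destruct IHN0. destruct (H (S N0)).
    split. apply Rmult_le_pos; auto. apply Rmult_le_compat; auto. }
  apply H0.
Qed.

Lemma prodf_ext f g N : (forall j, f j = g j) -> prodf f N = prodf g N.
Proof. intros H; induction N; simpl; rewrite ?IHN, ?H; auto. Qed.

Lemma rprod_pos X N : 0 < X -> 0 < rprod X N.
Proof. intros HX. apply prodf_pos. intros j. pose proof (pos_INR j). lra. Qed.

Lemma Cprod_real X N : Cprod_shift (X,0) N = RtoC (rprod X N).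
Proof.
  induction N as [|N IH].
  - unfold rprod; simpl. unfold RtoC. f_equal; ring.
  - change (Cprod_shift (X,0) (S N)) with (Cprod_shift (X,0) N * ((X,0) + RtoC (INR (S N))))%C.
    rewrite IH. unfold rprod. change (prodf (fun j => X + INR j) (S N)) with (rprod X N * (X + INR (S N))).
    unfold rprod, RtoC, Cmult, Cplus; simpl. f_equal; ring.
Qed.

Lemma gauss_real X N : 0 < X -> gauss_seq (X,0) N = RtoC (rg X N).
Proof.
  intros HX. unfold gauss_seq, rg. rewrite Cprod_real, Cnatpow_ecx.
  replace (ecx X 0 (ln (INR N))) with (RtoC (exp (X * ln (INR N)))).
  2:{ unfold ecx, RtoC. rewrite Rmult_0_l, cos_0, sin_0. f_equal; ring. }
  rewrite <- RtoC_mult, <- RtoC_div; auto. apply Rgt_not_eq, rprod_pos; auto.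
Qed.

Lemma Cmod_natpow N p q : Cmod (Cnatpow N (p,q)) = exp (p * ln (INR N)).
Proof.
  rewrite Cnatpow_ecx. unfold ecx, Cmod; simpl.
  set (e := exp (p * ln (INR N))). set (a := q * ln (INR N)).
  replace ((e * cos a) * ((e * cos a) * 1) + (e * sin a) * ((e * sin a) * 1)) with (e^2)
    by (pose proof (sin2_cos2 a); unfold Rsqr in *; nra).
  apply sqrt_pow2. left; apply exp_pos.
Qed.

Lemma Cmod_prod2 X t N : Cmod (Cprod_shift (X,t) N) ^ 2 = prodH X (t^2) N.
Proof.
  induction N as [|N IH].
  - unfold prodH. change (Cprod_shift (X,t) 0) with (X,t). rewrite Cmod2_alt. simpl. ring.
  - change (Cprod_shift (X,t) (S N)) with (Cprod_shift (X,t) N * ((X,t) + RtoC (INR (S N))))%C.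
    rewrite Cmod_mult, Rpow_mult_distr, IH, Cmod2_alt.
    unfold prodH. change (prodf (fun j => (X + INR j)^2 + t^2) (S N)) with (prodH X (t^2) N * ((X + INR (S N))^2 + t^2)).
    unfold prodH. f_equal. unfold RtoC, Cplus, Re, Im. cbn [fst snd]. ring.
Qed.

Lemma HH_complex X t N : 0 < X ->
  Re (gauss_seq (X,t) N) ^ 2 + Im (gauss_seq (X,t) N) ^ 2 = HH X (t^2) N.
Proof.
  intros HX. rewrite <- Cmod2_alt. unfold gauss_seq, HH.
  assert (HP := Cprod_nz X t N HX).
  rewrite Cmod_div by auto. rewrite Cmod_mult, Cmod_R, Cmod_natpow, Rabs_pos_eq by apply pos_INR.
  rewrite <- Cmod_prod2.
  assert (Cmod (Cprod_shift (X, t) N) <> 0) by (intro E; apply HP, Cmod_eq_0; auto).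
  replace (2 * X * ln (INR N)) with (X * ln (INR N) + X * ln (INR N)) by ring.
  rewrite exp_plus. field. auto.
Qed.

Lemma HH_real X s N : 0 < X - s -> 0 <= s ->
  HH X (-(s^2)) N = rg (X - s) N * rg (X + s) N.
Proof.
  intros H1 H2. unfold HH, rg.
  assert (prodH X (-(s^2)) N = rprod (X - s) N * rprod (X + s) N).
  { unfold prodH, rprod. rewrite <- prodf_mult. apply prodf_ext. intros j; ring. }
  rewrite H. pose proof (rprod_pos (X - s) N H1). pose proof (rprod_pos (X + s) N ltac:(lra)).
  replace (2 * X * ln (INR N)) with ((X - s) * ln (INR N) + (X + s) * ln (INR N)) by ring.
  rewrite exp_plus. field. lra.
Qed.

Lemma rg_mono X N : 0 < X -> (1 <= N)%nat -> rg X N <= rg X (S N).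
Proof.
  intros HX HN. unfold rg.
  change (rprod X (S N)) with (rprod X N * (X + INR (S N))).
  change (fact (S N)) with (S N * fact N)%nat. rewrite mult_INR.
  set (L := ln (INR (S N)) - ln (INR N)).
  replace (X * ln (INR (S N))) with (X * ln (INR N) + X * L) by (unfold L; ring).
  rewrite exp_plus.
  assert (NR1 : 1 <= INR N) by (apply (le_INR 1); auto).
  pose proof (lnstep (INR N) NR1) as HL. rewrite <- S_INR in HL. fold L in HL.
  rewrite S_INR in *.
  pose proof (rprod_pos X N HX). pose proof (INR_fact_lt_0 N) as F.
  pose proof (exp_pos (X * ln (INR N))).
  assert (HE : X + (INR N + 1) <= (INR N + 1) * exp (X * L)).
  { pose proof (exp_ineq1_le (X * L)).
    assert (X * (1 / (INR N + 1)) <= X * L) by (apply Rmult_le_compat_l; lra).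
    assert ((INR N + 1) * (1 + X * (1 / (INR N + 1))) <= (INR N + 1) * exp (X * L)) by (apply Rmult_le_compat_l; lra).
    replace ((INR N + 1) * (1 + X * (1 / (INR N + 1)))) with (X + (INR N + 1)) in H3 by (field; lra). lra. }
  set (a := INR (fact N) * exp (X * ln (INR N))).
  assert (0 < a) by (unfold a; apply Rmult_lt_0_compat; lra).
  replace ((INR N + 1) * INR (fact N) * (exp (X * ln (INR N)) * exp (X * L))) with (a * ((INR N + 1) * exp (X * L))) by (unfold a; ring).
  unfold Rdiv. rewrite Rinv_mult. 
  replace (a * ((INR N + 1) * exp (X * L)) * (/ rprod X N * / (X + (INR N + 1)))) with
    ((a * / rprod X N) * (((INR N + 1) * exp (X * L)) / (X + (INR N + 1)))) by (unfold Rdiv; ring).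
  rewrite <- (Rmult_1_r (a * / rprod X N)) at 1.
  apply Rmult_le_compat_l. left; apply Rmult_lt_0_compat; auto; apply Rinv_0_lt_compat; auto.
  apply (Rmult_le_reg_r (X + (INR N + 1))). lra. field_simplify; lra.
Qed.

Lemma rg_ge1 X N : 0 < X -> (1 <= N)%nat -> rg X 1 <= rg X N.
Proof.
  intros HX HN. induction N. lia. destruct (Nat.eq_dec N 0) as [->|h]. lra.
  eapply Rle_trans. apply IHN. lia. apply rg_mono; auto. lia.
Qed.

Lemma rg_pos X N : 0 < X -> 0 < rg X N.
Proof.
  intros HX. unfold rg. apply Rdiv_lt_0_compat. apply Rmult_lt_0_compat.
  apply INR_fact_lt_0. apply exp_pos. apply rprod_pos; auto.
Qed.

Lemma fac_exp_bound a u : 0 < a -> 0 <= u -> a + u <= a * exp (u / a).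
Proof.
  intros Ha Hu. pose proof (exp_ineq1_le (u/a)).
  assert (a * (1 + u/a) <= a * exp (u/a)) by (apply Rmult_le_compat_l; lra).
  replace (a * (1 + u/a)) with (a + u) in H0 by (field; lra). auto.
Qed.

Lemma prodH_pos X T N : 0 < X -> 0 < X^2 + T -> 0 < prodH X T N.
Proof.
  intros HX HT. apply prodf_pos. intros j. pose proof (pos_INR j). nra.
Qed.

Lemma prodH_bound X T N : 0 < X -> 0 < X^2 + T ->
  prodH X T N <= rprod X N ^ 2 * exp (Rabs T * (1 / X^2 + 2 - 2 / (INR N + 1))).
Proof.
  intros HX HT. pose proof (Rabs_pos T). pose proof (Rle_abs T).
  induction N as [|N IH].
  - unfold prodH, rprod; simpl. rewrite Rplus_0_r.
    replace (Rabs T * (1 / (X * (X * 1)) + 2 - 2 / (0 + 1))) with (Rabs T / (X * X)) by (field; lra).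
    replace (X * (X * 1)) with (X * X) by ring.
    assert (0 < X * X) by nra.
    pose proof (fac_exp_bound (X*X) (Rabs T) H1 H). lra.
  - assert (HP : 0 < prodH X T N) by (apply prodH_pos; auto).
    unfold prodH, rprod in *. 
    change (prodf (fun j => (X + INR j)^2 + T) (S N)) with (prodf (fun j => (X + INR j)^2 + T) N * ((X + INR (S N))^2 + T)).
    change (prodf (fun j => X + INR j) (S N)) with (prodf (fun j => X + INR j) N * (X + INR (S N))).
    set (P := prodf (fun j => (X + INR j)^2 + T) N) in *.
    set (Q := prodf (fun j => X + INR j) N) in *.
    rewrite S_INR in *. set (n := INR N) in *.
    assert (n0 : 0 <= n) by apply pos_INR.
    set (a := (X + (n + 1))^2).
    assert (Ha : (n+1)^2 <= a) by (unfold a; apply pow_incr; lra).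
    assert (Ha0 : 0 < a) by nra.
    assert (Hf : (X + (n + 1))^2 + T <= a * exp (Rabs T / a)).
    { pose proof (fac_exp_bound a (Rabs T) Ha0 H). fold a. lra. }
    assert (Hu : Rabs T / a <= Rabs T * (2 / (n + 1) - 2 / (n + 1 + 1))).
    { replace (2 / (n + 1) - 2 / (n + 1 + 1)) with (2 / ((n+1)*(n+2))) by (field; lra).
      unfold Rdiv. apply Rmult_le_compat_l; auto.
      apply Rle_trans with (/ (n+1)^2). apply Rinv_le_contravar; nra.
      rewrite <- (Rmult_1_l (/ (n+1)^2)).
      replace (2 * / ((n + 1) * (n + 2))) with ((2 * (n+1) / (n+2)) * / (n+1)^2) by (field; lra).
      apply Rmult_le_compat_r. left; apply Rinv_0_lt_compat; nra.
      apply (Rmult_le_reg_r (n+2)). lra. field_simplify; lra. }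
    assert (Hf2 : (X + (n + 1))^2 + T <= a * exp (Rabs T * (2 / (n + 1) - 2 / (n + 1 + 1)))).
    { eapply Rle_trans. apply Hf. apply Rmult_le_compat_l. lra. apply exp_mono; auto. }
    assert (Hfp : 0 < (X + (n + 1))^2 + T) by nra.
    eapply Rle_trans. apply Rmult_le_compat. lra. unfold a; lra. apply IH. apply Hf2.
    replace (Rabs T * (1 / X ^ 2 + 2 - 2 / (n + 1 + 1))) with
      (Rabs T * (1 / X ^ 2 + 2 - 2 / (n + 1)) + Rabs T * (2 / (n + 1) - 2 / (n + 1 + 1))) by ring.
    rewrite exp_plus. unfold a. right; ring.
Qed.

Lemma HH_lower X T N : 0 < X -> 0 < X^2 + T -> (1 <= N)%nat ->
  rg X 1 ^ 2 * exp (- (Rabs T * (1 / X^2 + 2))) <= HH X T N.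
Proof.
  intros HX HT HN.
  pose proof (prodH_bound X T N HX HT). pose proof (prodH_pos X T N HX HT).
  pose proof (rg_ge1 X N HX HN). pose proof (rg_pos X 1 HX).
  pose proof (rprod_pos X N HX).
  assert (HH X T N >= rg X N ^ 2 * exp (- (Rabs T * (1 / X ^ 2 + 2 - 2 / (INR N + 1))))).
  { unfold HH, rg. 
    set (E := exp (Rabs T * (1 / X ^ 2 + 2 - 2 / (INR N + 1)))) in *.
    assert (0 < E) by apply exp_pos.
    replace (exp (- (Rabs T * (1 / X ^ 2 + 2 - 2 / (INR N + 1))))) with (/ E) by (unfold E; rewrite exp_Ropp; auto).
    replace (exp (2 * X * ln (INR N))) with (exp (X * ln (INR N)) ^ 2) by (simpl; rewrite Rmult_1_r, <- exp_plus; f_equal; ring).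
    set (F := INR (fact N)). set (G := exp (X * ln (INR N))).
    assert (0 < F) by apply INR_fact_lt_0. assert (0 < G) by apply exp_pos.
    apply Rle_ge. replace ((F * G / rprod X N) ^ 2 * / E) with (F^2 * G^2 / (rprod X N ^2 * E)) by (field; lra).
    unfold Rdiv. apply Rmult_le_compat_l. nra.
    apply Rinv_le_contravar; auto. }
  assert (exp (- (Rabs T * (1 / X ^ 2 + 2))) <= exp (- (Rabs T * (1 / X ^ 2 + 2 - 2 / (INR N + 1))))).
  { apply exp_mono. pose proof (pos_INR N). pose proof (Rabs_pos T).
    assert (0 <= 2 / (INR N + 1)) by (apply Rdiv_le_0_compat; lra). nra. }
  assert (rg X 1 ^ 2 <= rg X N ^ 2) by (apply pow_incr; lra).
  pose proof (exp_pos (- (Rabs T * (1 / X ^ 2 + 2)))).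
  assert (0 <= rg X 1 ^2) by nra.
  apply Rge_le in H4. eapply Rle_trans; [|apply H4].
  apply Rmult_le_compat; auto; lra.
Qed.

Definition LH X T := real (Lim_seq (HH X T)).

Lemma HH_ex X T : 0 < X -> 0 < X^2 + T -> exists l : R, is_lim_seq (HH X T) l.
Proof.
  intros HX HT. destruct (Rle_or_lt 0 T) as [T0|T0].
  - set (t := sqrt T). assert (Ht : t^2 = T) by (apply pow2_sqrt; auto).
    destruct (CGamma_lim X t HX) as [H1 H2].
    exists (Re (CGamma (X,t)) * Re (CGamma (X,t)) + Im (CGamma (X,t)) * Im (CGamma (X,t))).
    apply is_lim_seq_ext with (fun N => Re (gauss_seq (X,t) N) * Re (gauss_seq (X,t) N) + Im (gauss_seq (X,t) N) * Im (gauss_seq (X,t) N)).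
    { intros N. rewrite <- Ht, <- HH_complex by auto. ring. }
    apply is_lim_seq_plus'; apply is_lim_seq_mult'; auto.
  - set (s := sqrt (- T)). assert (Hs : s^2 = - T) by (apply pow2_sqrt; lra).
    assert (s0 : 0 <= s) by apply sqrt_pos.
    assert (sX : s < X) by nra.
    destruct (CGamma_lim (X - s) 0 ltac:(lra)) as [H1 _].
    destruct (CGamma_lim (X + s) 0 ltac:(lra)) as [H2 _].
    exists (Re (CGamma (X - s, 0)) * Re (CGamma (X + s, 0))).
    apply is_lim_seq_ext with (fun N => Re (gauss_seq (X - s,0) N) * Re (gauss_seq (X + s, 0) N)).
    { intros N. rewrite !gauss_real by lra. simpl. replace T with (- (s^2)) by lra.
      rewrite HH_real by lra. auto. }
    apply is_lim_seq_mult'; auto.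
Qed.

Lemma HH_lim X T : 0 < X -> 0 < X^2 + T ->
  is_lim_seq (HH X T) (LH X T) /\ 0 < LH X T.
Proof.
  intros HX HT. destruct (HH_ex X T HX HT) as [l Hl].
  unfold LH. rewrite (is_lim_seq_unique _ _ Hl). simpl. split; auto.
  set (c := rg X 1 ^ 2 * exp (- (Rabs T * (1 / X^2 + 2)))).
  assert (c0 : 0 < c).
  { unfold c. pose proof (rg_pos X 1 HX). apply Rmult_lt_0_compat. nra. apply exp_pos. }
  assert (Rbar_le c l).
  { apply (is_lim_seq_le_loc (fun _ => c) (HH X T)); auto.
    exists 1%nat. intros n Hn. apply HH_lower; auto. apply is_lim_seq_const. }
  simpl in H. lra.
Qed.

Lemma Cprod_conj p q N : Cprod_shift (p,-q) N = Cconj (Cprod_shift (p,q) N).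
Proof.
  induction N as [|N IH].
  - reflexivity.
  - change (Cprod_shift (p,-q) (S N)) with (Cmult (Cprod_shift (p,-q) N) (Cplus (p,-q) (RtoC (INR (S N))))).
    change (Cprod_shift (p,q) (S N)) with (Cmult (Cprod_shift (p,q) N) (Cplus (p,q) (RtoC (INR (S N))))).
    rewrite Cmult_conj, Cplus_conj, IH. f_equal. f_equal. unfold Cconj, RtoC; simpl. f_equal; ring.
Qed.

Lemma gauss_conj p q N : 0 < p -> gauss_seq (p,-q) N = Cconj (gauss_seq (p,q) N).
Proof.
  intros Hp. unfold gauss_seq. rewrite Cdiv_conj by (apply Cprod_nz; auto).
  rewrite Cmult_conj, Cprod_conj, !Cnatpow_ecx. f_equal. f_equal.
  - unfold Cconj, RtoC; simpl. f_equal; ring.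
  - unfold ecx, Cconj; simpl. rewrite Ropp_mult_distr_l_reverse, cos_neg, sin_neg. f_equal; ring.
Qed.

Lemma CGamma_conj p q : 0 < p -> CGamma (p,-q) = Cconj (CGamma (p,q)).
Proof.
  intros Hp. destruct (CGamma_lim p q Hp) as [H1 H2].
  unfold CGamma at 1. cbn [fst snd].
  assert (E1 : Lim_seq (fun N => Re (gauss_seq (p,-q) N)) = Re (CGamma (p,q))).
  { apply is_lim_seq_unique. eapply is_lim_seq_ext; [|exact H1]. intros N. rewrite gauss_conj by auto. rewrite re_conj. auto. }
  assert (E2 : Lim_seq (fun N => Im (gauss_seq (p,-q) N)) = - Im (CGamma (p,q))).
  { apply is_lim_seq_unique. apply is_lim_seq_ext with (fun N => - Im (gauss_seq (p,q) N)).
    intros N. rewrite gauss_conj by auto. rewrite im_conj. auto.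
    apply is_lim_seq_opp in H2. simpl in H2. auto. }
  rewrite E1, E2. destruct (CGamma (p,q)); reflexivity.
Qed.

Lemma CGamma_real r : 0 < r -> CGamma (r,0) = RtoC (Re (CGamma (r,0))) /\
  is_lim_seq (rg r) (Re (CGamma (r,0))).
Proof.
  intros Hr. destruct (CGamma_lim r 0 Hr) as [H1 H2].
  assert (Him : Im (CGamma (r,0)) = 0).
  { assert (is_lim_seq (fun _ => 0) (Im (CGamma (r,0)))).
    { eapply is_lim_seq_ext; [|exact H2]. intros N. cbv beta. rewrite gauss_real by auto. reflexivity. }
    pose proof (is_lim_seq_unique _ _ H). rewrite Lim_seq_const in H0. injection H0; auto. }
  split.
  - destruct (CGamma (r,0)) as [u v]. simpl in *. rewrite Him. reflexivity.
  - eapply is_lim_seq_ext; [|exact H1]. intros N. cbv beta. rewrite gauss_real by auto. reflexivity.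
Qed.

Lemma arg1 u a b : Cplus (RtoC u) (Cdiv (Cplus (RtoC a) (Cmult (RtoC b) Ci)) (RtoC 2)) = (u + a/2, b/2).
Proof. unfold Cplus, Cdiv, Cmult, Cinv, RtoC, Ci; simpl. f_equal; field. Qed.
Lemma arg1m u a b : Cplus (RtoC u) (Cdiv (Cminus (RtoC a) (Cmult (RtoC b) Ci)) (RtoC 2)) = (u + a/2, -(b/2)).
Proof. unfold Cminus, Copp, Cplus, Cdiv, Cmult, Cinv, RtoC, Ci; simpl. f_equal; field. Qed.
Lemma arg2 u a b : Cplus (RtoC u) (Cdiv (Cplus (RtoC a) (Cmult (Cmult Ci (RtoC b)) Ci)) (RtoC 2)) = (u + (a - b)/2, 0).
Proof. unfold Cplus, Cdiv, Cmult, Cinv, RtoC, Ci; simpl. f_equal; field. Qed.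
Lemma arg2m u a b : Cplus (RtoC u) (Cdiv (Cminus (RtoC a) (Cmult (Cmult Ci (RtoC b)) Ci)) (RtoC 2)) = (u + (a + b)/2, 0).
Proof. unfold Cminus, Copp, Cplus, Cdiv, Cmult, Cinv, RtoC, Ci; simpl. f_equal; field. Qed.

Lemma helper1 c (G1 G2 : C) : G2 <> 0%C ->
  (RtoC c * ((G1 / G2) * (Cconj G1 / Cconj G2)))%C = RtoC (c * (Cmod G1 ^ 2 / Cmod G2 ^ 2)).
Proof.
  intros H. assert (Cmod G2 <> 0) by (intro E; apply H, Cmod_eq_0; auto).
  assert (Cconj G2 <> 0%C) by (intro E; apply H0; rewrite <- Cmod_conj, E; apply Cmod_0).
  rewrite RtoC_mult, RtoC_div by (apply pow_nonzero; auto).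
  rewrite !Cmod2_conj. field. auto.
Qed.

Lemma helper2 c A B C D : B <> 0 -> D <> 0 ->
  (RtoC c * ((RtoC A / RtoC B) * (RtoC C / RtoC D)))%C = RtoC (c * ((A * C) / (B * D))).
Proof.
  intros HB HD. rewrite <- !RtoC_div by auto. rewrite <- !RtoC_mult. f_equal. field; auto.
Qed.

Lemma lim_eq (u : nat -> R) (a b : R) : is_lim_seq u a -> is_lim_seq u b -> a = b.
Proof.
  intros H1 H2. apply is_lim_seq_unique in H1. apply is_lim_seq_unique in H2.
  rewrite H1 in H2. injection H2; auto.
Qed.

Lemma Cmod_CGamma2 X t T : 0 < X -> t^2 = T -> 0 < X^2 + T ->
  Cmod (CGamma (X,t)) ^ 2 = LH X T.
Proof.
  intros HX Ht HT. rewrite Cmod2_alt. destruct (CGamma_lim X t HX) as [H1 H2].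
  destruct (HH_lim X T HX HT) as [H3 _].
  apply (lim_eq (HH X T)); auto.
  apply is_lim_seq_ext with (fun N => Re (gauss_seq (X,t) N) * Re (gauss_seq (X,t) N) + Im (gauss_seq (X,t) N) * Im (gauss_seq (X,t) N)).
  { intros N. rewrite <- Ht, <- HH_complex by auto. ring. }
  replace (Re (CGamma (X, t)) ^ 2 + Im (CGamma (X, t)) ^ 2) with
    (Re (CGamma (X, t)) * Re (CGamma (X, t)) + Im (CGamma (X, t)) * Im (CGamma (X, t))) by ring.
  apply is_lim_seq_plus'; apply is_lim_seq_mult'; auto.
Qed.

Lemma Theta_formula n k g lam m l X0 T :
  X0 = (1-g)/2 + a_ n k m / 2 -> T = (lam l - (INR k/2)^2)/4 -> 0 < g -> 0 < X0 -> 0 < X0^2 + T ->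
  Re (Theta n k g lam m l) = Rpower 4 g * (LH (X0+g) T / LH X0 T).
Proof.
  intros HX0 HT Hg HX HXT. unfold Theta, b_. cbv zeta.
  assert (HXT' : 0 < (X0+g)^2 + T) by nra.
  destruct (Rle_dec ((INR k / 2) ^ 2) (lam l)) as [h|h].
  - rewrite !arg1, !arg1m. set (b := sqrt (lam l - (INR k / 2) ^ 2)).
    replace ((1+g)/2 + a_ n k m/2) with (X0 + g) by (subst; field).
    replace ((1-g)/2 + a_ n k m/2) with X0 by (subst; field).
    rewrite !CGamma_conj by lra.
    assert (Hb : (b/2)^2 = T).
    { subst T. unfold b. replace ((sqrt (lam l - (INR k / 2) ^ 2) / 2) ^ 2) with (sqrt (lam l - (INR k / 2) ^ 2) ^ 2 / 4) by field.
      rewrite pow2_sqrt; lra. }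
    pose proof (Cmod_CGamma2 (X0+g) (b/2) T ltac:(lra) Hb HXT') as M1.
    pose proof (Cmod_CGamma2 X0 (b/2) T HX Hb HXT) as M2.
    destruct (HH_lim X0 T HX HXT) as [_ P2].
    rewrite helper1. cbn [Re RtoC fst]. rewrite M1, M2. auto.
    intro E. rewrite E, Cmod_0 in M2. simpl in M2. lra.
  - rewrite !arg2, !arg2m. set (b := sqrt ((INR k / 2) ^ 2 - lam l)).
    set (s := b/2).
    assert (Hs : s^2 = - T).
    { subst T. unfold s, b. replace ((sqrt ((INR k / 2) ^ 2 - lam l) / 2) ^ 2) with (sqrt ((INR k / 2) ^ 2 - lam l) ^ 2 / 4) by field.
      rewrite pow2_sqrt; lra. }
    assert (s0 : 0 <= s) by (unfold s, b; pose proof (sqrt_pos ((INR k / 2) ^ 2 - lam l)); lra).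
    assert (sX : s < X0) by nra.
    replace ((1+g)/2 + (a_ n k m - b)/2) with (X0 + g - s) by (subst; unfold s; field).
    replace ((1-g)/2 + (a_ n k m - b)/2) with (X0 - s) by (subst; unfold s; field).
    replace ((1+g)/2 + (a_ n k m + b)/2) with (X0 + g + s) by (subst; unfold s; field).
    replace ((1-g)/2 + (a_ n k m + b)/2) with (X0 + s) by (subst; unfold s; field).
    destruct (CGamma_real (X0 + g - s) ltac:(lra)) as [E1 L1].
    destruct (CGamma_real (X0 - s) ltac:(lra)) as [E2 L2].
    destruct (CGamma_real (X0 + g + s) ltac:(lra)) as [E3 L3].
    destruct (CGamma_real (X0 + s) ltac:(lra)) as [E4 L4].
    rewrite E1, E2, E3, E4.
    assert (Q1 : Re (CGamma (X0 + g - s, 0)) * Re (CGamma (X0 + g + s, 0)) = LH (X0 + g) T).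
    { destruct (HH_lim (X0+g) T ltac:(lra) HXT') as [H _].
      apply (lim_eq (HH (X0+g) T)); auto.
      apply is_lim_seq_ext with (fun N => rg (X0 + g - s) N * rg (X0 + g + s) N).
      { intros N. replace T with (- (s^2)) by lra. rewrite HH_real by lra. auto. }
      apply is_lim_seq_mult'; auto. }
    assert (Q2 : Re (CGamma (X0 - s, 0)) * Re (CGamma (X0 + s, 0)) = LH X0 T).
    { destruct (HH_lim X0 T HX HXT) as [H _].
      apply (lim_eq (HH X0 T)); auto.
      apply is_lim_seq_ext with (fun N => rg (X0 - s) N * rg (X0 + s) N).
      { intros N. replace T with (- (s^2)) by lra. rewrite HH_real by lra. auto. }
      apply is_lim_seq_mult'; auto. }
    destruct (HH_lim X0 T HX HXT) as [_ P2].
    rewrite helper2. cbn [Re RtoC fst]. rewrite Q1, Q2. auto.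
    intro E. rewrite E in Q2. lra.
    intro E. rewrite E in Q2. lra.
Qed.

Lemma HH_ratio X g T N : 0 < X -> 0 < g -> 0 < X^2 + T ->
  HH (X+g) T N / HH X T N = exp (2 * g * ln (INR N)) * (prodH X T N / prodH (X+g) T N).
Proof.
  intros HX Hg HT. unfold HH.
  pose proof (prodH_pos X T N HX HT). pose proof (prodH_pos (X+g) T N ltac:(lra) ltac:(nra)).
  pose proof (INR_fact_lt_0 N). pose proof (exp_pos (2 * X * ln (INR N))).
  replace (2 * (X + g) * ln (INR N)) with (2 * X * ln (INR N) + 2 * g * ln (INR N)) by ring.
  rewrite exp_plus. field. repeat split; lra.
Qed.

Lemma ratio_lim X g T : 0 < X -> 0 < g -> 0 < X^2 + T ->
  is_lim_seq (fun N => HH (X+g) T N / HH X T N) (LH (X+g) T / LH X T) /\ 0 < LH (X+g) T / LH X T.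
Proof.
  intros HX Hg HT.
  destruct (HH_lim X T HX HT) as [H1 P1].
  destruct (HH_lim (X+g) T ltac:(lra) ltac:(nra)) as [H2 P2].
  split. apply is_lim_seq_div'; auto. lra. apply Rdiv_lt_0_compat; auto.
Qed.

Lemma mono_T X g T T' : 0 < X -> 0 < g -> 0 < X^2 + T -> T <= T' ->
  LH (X+g) T / LH X T <= LH (X+g) T' / LH X T'.
Proof.
  intros HX Hg HT HTT.
  assert (HT' : 0 < X^2 + T') by lra.
  destruct (ratio_lim X g T HX Hg HT) as [L1 _].
  destruct (ratio_lim X g T' HX Hg HT') as [L2 _].
  assert (Rbar_le (LH (X+g) T / LH X T) (LH (X+g) T' / LH X T')).
  { apply (is_lim_seq_le _ _ _ _ ) with (2 := L1) (3 := L2). intros N.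
    rewrite !HH_ratio by auto.
    apply Rmult_le_compat_l. left; apply exp_pos.
    pose proof (prodH_pos X T N HX HT). pose proof (prodH_pos (X+g) T N ltac:(lra) ltac:(nra)).
    pose proof (prodH_pos X T' N HX HT'). pose proof (prodH_pos (X+g) T' N ltac:(lra) ltac:(nra)).
    assert (prodH X T N * prodH (X+g) T' N <= prodH X T' N * prodH (X+g) T N).
    { unfold prodH. rewrite <- !prodf_mult. apply prodf_le. intros j. pose proof (pos_INR j).
      assert (X^2 <= (X + INR j)^2) by (apply pow_incr; lra).
      assert ((X + INR j)^2 <= (X + g + INR j)^2) by (apply pow_incr; lra).
      split. apply Rmult_le_pos; lra.
      assert (((X + INR j) ^ 2 + T') * ((X + g + INR j) ^ 2 + T) - ((X + INR j) ^ 2 + T) * ((X + g + INR j) ^ 2 + T')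
              = ((X + g + INR j)^2 - (X + INR j)^2) * (T' - T)) by ring.
      assert (0 <= ((X + g + INR j)^2 - (X + INR j)^2) * (T' - T)) by (apply Rmult_le_pos; lra).
      lra. }
    apply (Rmult_le_reg_r (prodH (X+g) T N * prodH (X+g) T' N)). nra.
    replace (prodH X T N / prodH (X + g) T N * (prodH (X + g) T N * prodH (X + g) T' N)) with (prodH X T N * prodH (X+g) T' N) by (field; lra).
    replace (prodH X T' N / prodH (X + g) T' N * (prodH (X + g) T N * prodH (X + g) T' N)) with (prodH X T' N * prodH (X+g) T N) by (field; lra).
    auto. }
  simpl in H. auto.
Qed.

Lemma prodf_ratio F G N : (forall j, 0 < G j <= F j) -> F 0%nat / G 0%nat * prodf G N <= prodf F N.
Proof.
  intros H. induction N as [|N IH]; simpl.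
  - destruct (H 0%nat). right; field; lra.
  - destruct (H (S N)). 
    assert (0 <= F 0%nat / G 0%nat * prodf G N).
    { destruct (H 0%nat). apply Rmult_le_pos. apply Rdiv_le_0_compat; lra. left; apply prodf_pos. intros j; apply H. }
    replace (F 0%nat / G 0%nat * (prodf G N * G (S N))) with ((F 0%nat / G 0%nat * prodf G N) * G (S N)) by ring.
    apply Rmult_le_compat; lra.
Qed.

Lemma mono_X X g T : 0 < X -> 0 < g -> 0 < X^2 + T -> T <= 0 ->
  LH (X+g) T / LH X T < LH (X + /2 + g) T / LH (X + /2) T.
Proof.
  intros HX Hg HT HT0.
  set (X' := X + /2).
  assert (HX' : 0 < X') by (unfold X'; lra).
  assert (HT' : 0 < X'^2 + T) by (unfold X'; nra).
  destruct (ratio_lim X g T HX Hg HT) as [L1 P1].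
  destruct (ratio_lim X' g T HX' Hg HT') as [L2 P2].
  set (Fj := fun j => ((X' + INR j)^2 + T) * ((X + g + INR j)^2 + T)).
  set (Gj := fun j => ((X' + g + INR j)^2 + T) * ((X + INR j)^2 + T)).
  assert (HFG : forall j, 0 < Gj j < Fj j).
  { intros j. unfold Fj, Gj. pose proof (pos_INR j).
    set (u := X + INR j). set (u' := X' + INR j).
    assert (u' = u + /2) by (unfold u, u', X'; ring).
    assert (X^2 <= u^2) by (apply pow_incr; unfold u; lra).
    assert (0 < u) by (unfold u; lra).
    assert (0 < u^2 + T) by lra.
    assert (0 < (u' + g)^2 + T) by nra.
    assert (0 < (u + g)^2 + T) by nra.
    assert (0 < u'^2 + T) by nra.
    replace (X' + g + INR j) with (u' + g) by (unfold u'; ring).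
    replace (X + g + INR j) with (u + g) by (unfold u; ring).
    split. apply Rmult_lt_0_compat; auto.
    assert ((u'^2 + T) * ((u + g)^2 + T) - ((u' + g)^2 + T) * (u^2 + T) = g * (u' - u) * (2 * (u * u' - T) + g * (u + u'))) by ring.
    assert (0 < g * (u' - u) * (2 * (u * u' - T) + g * (u + u'))).
    { apply Rmult_lt_0_compat. apply Rmult_lt_0_compat; lra. nra. }
    lra. }
  set (rho := Fj 0%nat / Gj 0%nat).
  assert (Hrho : 1 < rho).
  { unfold rho. destruct (HFG 0%nat). apply (Rmult_lt_reg_r (Gj 0%nat)); auto. field_simplify; lra. }
  assert (Rbar_le (rho * (LH (X+g) T / LH X T)) (LH (X' + g) T / LH X' T)).
  { apply (is_lim_seq_le (fun N => rho * (HH (X+g) T N / HH X T N)) (fun N => HH (X'+g) T N / HH X' T N)).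
    2:{ apply is_lim_seq_scal_l with (a := rho) in L1. simpl in L1. auto. }
    2:{ auto. }
    intros N. rewrite !HH_ratio by auto.
    pose proof (prodH_pos X T N HX HT). pose proof (prodH_pos (X+g) T N ltac:(lra) ltac:(nra)).
    pose proof (prodH_pos X' T N HX' HT'). pose proof (prodH_pos (X'+g) T N ltac:(lra) ltac:(nra)).
    assert (PR : rho * prodf Gj N <= prodf Fj N).
    { apply prodf_ratio. intros j. destruct (HFG j). lra. }
    unfold Fj, Gj in PR. rewrite !prodf_mult in PR. fold (prodH X' T N) (prodH (X+g) T N) (prodH (X'+g) T N) (prodH X T N) in PR.
    replace (rho * (exp (2 * g * ln (INR N)) * (prodH X T N / prodH (X + g) T N))) with
      (exp (2 * g * ln (INR N)) * (rho * (prodH X T N / prodH (X + g) T N))) by ring.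
    apply Rmult_le_compat_l. left; apply exp_pos.
    apply (Rmult_le_reg_r (prodH (X+g) T N * prodH (X'+g) T N)). nra.
    replace (rho * (prodH X T N / prodH (X + g) T N) * (prodH (X + g) T N * prodH (X' + g) T N)) with (rho * (prodH (X' + g) T N * prodH X T N)) by (field; lra).
    replace (prodH X' T N / prodH (X' + g) T N * (prodH (X + g) T N * prodH (X' + g) T N)) with (prodH X' T N * prodH (X + g) T N) by (field; lra).
    auto. }
  simpl in H. nra.
Qed.

Theorem proposition3p8 (n k : nat) (gamma : R) (lambda : nat -> R) :
  0 < gamma -> gamma < INR n / 2 ->
  (1 <= k)%nat -> INR k < INR n / 2 - gamma ->
  lambda 0%nat = 0 -> 0 < lambda 1%nat ->
  (forall l : nat, lambda l <= lambda (S l)) ->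
  forall m l : nat,
    Re (Theta n k gamma lambda (S m) 0) > Re (Theta n k gamma lambda m 0) /\
    Re (Theta n k gamma lambda m (S l)) >= Re (Theta n k gamma lambda m l).
Proof.
  intros Hg Hgn Hk Hkn H0 H1 Hmono m l.
  assert (Hnk : (k + 2 <= n)%nat).
  { assert (INR (2 * k) < INR n) by (rewrite mult_INR; simpl; lra).
    apply INR_lt in H. lia. }
  apply le_INR in Hnk. rewrite plus_INR in Hnk. simpl in Hnk.
  assert (Hk1 : 1 <= INR k) by (apply (le_INR 1); auto).
  set (c := (INR n - INR k - 2) / 2).
  assert (c0 : 0 <= c) by (unfold c; lra).
  assert (Ha : forall m, a_ n k m = INR m + c).
  { intros j. unfold a_, mu_. pose proof (pos_INR j).
    replace (INR j * (INR j + INR n - INR k - 2) + ((INR n - INR k - 2) / 2) ^ 2) with ((INR j + c)^2) by (unfold c; field).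
    apply sqrt_pow2. lra. }
  assert (Hlam : forall l, 0 <= lambda l).
  { induction l0. lra. specialize (Hmono l0). lra. }
  set (X0 := fun j => (1 - gamma) / 2 + a_ n k j / 2).
  set (TT := fun j => (lambda j - (INR k / 2)^2) / 4).
  assert (HX : forall j, INR k / 4 < X0 j).
  { intros j. unfold X0. rewrite Ha. pose proof (pos_INR j). unfold c. lra. }
  assert (HT : forall j, - (INR k / 4)^2 <= TT j).
  { intros j. unfold TT. specialize (Hlam j). lra. }
  assert (HXT : forall j l, 0 < X0 j ^ 2 + TT l).
  { intros j l0. specialize (HX j). specialize (HT l0).
    assert ((INR k / 4)^2 < X0 j ^2) by nra. lra. }
  assert (HX0 : forall j, 0 < X0 j) by (intros j; specialize (HX j); lra).
  assert (HR : 0 < Rpower 4 gamma) by (unfold Rpower; apply exp_pos).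
  split.
  - rewrite (Theta_formula n k gamma lambda (S m) 0 (X0 (S m)) (TT 0%nat)); auto.
    rewrite (Theta_formula n k gamma lambda m 0 (X0 m) (TT 0%nat)); auto.
    assert (E : X0 (S m) = X0 m + /2) by (unfold X0; rewrite !Ha, S_INR; field).
    rewrite E. unfold Rgt. apply Rmult_lt_compat_l; auto.
    apply mono_X; auto. unfold TT. rewrite H0. pose proof (pow2_ge_0 (INR k / 2)). lra.
  - rewrite (Theta_formula n k gamma lambda m (S l) (X0 m) (TT (S l))); auto.
    rewrite (Theta_formula n k gamma lambda m l (X0 m) (TT l)); auto.
    apply Rle_ge. apply Rmult_le_compat_l. lra.
    apply mono_T; auto. unfold TT. specialize (Hmono l). lra.
Qed.
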